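(* Every finite-dimensional Yetter-Drinfeld module over $H=B(n,w,\gamma)$ contains a standard element.
   Context: $\Bbbk$ is an algebraically closed field of characteristic $0$; $n,w$ positive integers, $\gamma$ a primitive $n$-th root of unity. $H=B(n,w,\gamma)$ is the Hopf algebra generated by $x^{\pm1},g,y$ with relations $xx^{-1}=x^{-1}x=1$, $xg=gx$, $xy=yx$, $yg=\gamma gy$, $y^n=1-x^w=1-g^n$, with $\Delta(x)=x\otimes x$, $\Delta(g)=g\otimes g$, $\Delta(y)=y\otimes g+1\otimes y$, $\varepsilon(x)=\varepsilon(g)=1$, $\varepsilon(y)=0$, $S(x)=x^{-1}$, $S(g)=g^{-1}$, $S(y)=-yg^{-1}$; its group of group-likes is $G(H)=\{g^jx^k\}$. A (left-left) Yetter-Drinfeld module is a left $H$-module, left $H$-comodule $(V,\cdot,\delta)$ with $\delta(h\cdot v)=h_{(1)}v_{(-1)}S(h_{(3)})\otimes h_{(2)}\cdot v_{(0)}$. A nonzero $v\in V$ is a standard element (of type $(\alpha,\beta,h)$) if there are $h\in G(H)$ and $\alpha,\beta\in\Bbbk^*$ with $x\cdot v=\alpha v$, $g\cdot v=\beta v$, $\delta(v)=h\otimes v$. *)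

(* Defs.v *)
(* Concrete model of H = B(n,w,gamma) on its PBW basis
   { y^i g^j x^k : 0 <= i < n, 0 <= j < n, k in Z }, and Yetter-Drinfeld
   modules over H on K^d (column vectors, h.v = rho(h) *m v). *)
From HB Require Import structures.
From mathcomp Require Import all_boot all_order all_algebra.
Set Implicit Arguments.
Unset Strict Implicit.
Unset Printing Implicit Defensive.
Import GRing.Theory.
Local Open Scope ring_scope.

(* index (i, j, k) stands for the element y^i g^j x^k of H *)
Definition bidx := (nat * nat * int)%type.

Section BHopf.
Variable K : fieldType.
Variables (n w : nat) (gam : K).

Definition canon (e : bidx) : bool := (e.1.1 < n)%N && (e.1.2 < n)%N.

Definition Hf := seq (K * bidx).

(* normal form of y^i g^j x^k, using g^n = x^w and y^n = 1 - x^w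
   (y^(qn+r) = y^r (1 - x^w)^q = sum_t (-1)^t C(q,t) y^r x^(wt)) *)
Definition normb (i j : nat) (k : int) : Hf :=
  let q := (i %/ n)%N in let r := (i %% n)%N in
  [seq ((-1) ^+ t * ('C(q, t))%:R,
        (r, (j %% n)%N, k + (w * (j %/ n))%N%:Z + (w * t)%N%:Z)) | t <- iota 0 q.+1].

(* product of basis elements: y^i g^j x^k . y^i' g^j' x^k'
   = gam^-(j i') y^(i+i') g^(j+j') x^(k+k')   (since g y = gam^-1 y g) *)
Definition mulb (a b : bidx) : Hf :=
  let: (i, j, k) := a in let: (i', j', k') := b in
  [seq (gam ^- (j * i') * p.1, p.2) | p <- normb (i + i') (j + j') (k + k')].

Definition mulH (u v : Hf) : Hf :=
  flatten [seq [seq (p.1 * q.1 * r.1, r.2) | r <- mulb p.2 q.2] | p <- u, q <- v].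

Definition oneH : Hf := normb 0 0 0.
Definition powH (u : Hf) (m : nat) : Hf := iter m (mulH u) oneH.
Definition hx : Hf := normb 0 0 1.
Definition hxi : Hf := normb 0 0 (-1).
Definition hg : Hf := normb 0 1 0.
Definition hgi : Hf := normb 0 n.-1 (- (w%:Z)).  (* g^-1 = g^(n-1) x^-w *)
Definition hy : Hf := normb 1 0 0.
Definition xpowH (k : int) : Hf :=
  match k with Posz m => powH hx m | Negz m => powH hxi m.+1 end.
Definition eb (e : bidx) : Hf := normb e.1.1 e.1.2 e.2.

Definition coefH (e : bidx) (u : Hf) : K :=
  \sum_(p <- u) (if p.2 == e then p.1 else 0).

Definition epsb (e : bidx) : K := (e.1.1 == 0)%N%:R.

Definition Sy : Hf := [seq (- p.1, p.2) | p <- mulH hy hgi].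
Definition antib (e : bidx) : Hf :=
  let: (i, j, k) := e in mulH (xpowH (- k)) (mulH (powH hgi j) (powH Sy i)).

Definition H2 := seq (K * bidx * bidx).
Definition tensH (u v : Hf) : H2 := [seq (p.1 * q.1, p.2, q.2) | p <- u, q <- v].
Definition mulH2 (U V : H2) : H2 :=
  flatten [seq tensH [seq (p.1.1 * q.1.1 * r.1, r.2) | r <- mulb p.1.2 q.1.2]
                     (mulb p.2 q.2) | p <- U, q <- V].
Definition oneH2 : H2 := tensH oneH oneH.
Definition powH2 (U : H2) (m : nat) : H2 := iter m (mulH2 U) oneH2.
Definition Dy : H2 := tensH hy hg ++ tensH oneH hy.
Definition Dg : H2 := tensH hg hg.
Definition Dx : H2 := tensH hx hx.
Definition Dxi : H2 := tensH hxi hxi.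
Definition DxpowH (k : int) : H2 :=
  match k with Posz m => powH2 Dx m | Negz m => powH2 Dxi m.+1 end.
(* coproduct of a basis element (Delta is an algebra map) *)
Definition Delb (e : bidx) : H2 :=
  let: (i, j, k) := e in mulH2 (powH2 Dy i) (mulH2 (powH2 Dg j) (DxpowH k)).
Definition coef2 (a b : bidx) (U : H2) : K :=
  \sum_(p <- U) (if (p.1.2 == a) && (p.2 == b) then p.1.1 else 0).
(* (Delta (x) id) Delta of a basis element: entries (c, h1, h2, h3) *)
Definition H3 := seq (K * bidx * bidx * bidx).
Definition Del2b (e : bidx) : H3 :=
  flatten [seq [seq (p.1.1 * q.1.1, q.1.2, q.2, p.2) | q <- Delb p.1.2] | p <- Delb e].

(* A d-dimensional Yetter-Drinfeld module: action matrices X (x), Xi (x^-1),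
   G (g), Y (y); coaction delta(v) = sum_(e <- s) e (x) (D e *m v). *)
Variable d : nat.
Variables (X Xi G Y : 'M[K]_d) (D : bidx -> 'M[K]_d) (s : seq bidx).

Definition Xpow (k : int) : 'M[K]_d :=
  match k with Posz m => X ^+ m | Negz m => Xi ^+ m.+1 end.
Definition rhob (e : bidx) : 'M[K]_d :=
  let: (i, j, k) := e in Y ^+ i * G ^+ j * Xpow k.

Definition is_Hmodule : Prop :=
  [/\ X * Xi = 1, Xi * X = 1, X * G = G * X, X * Y = Y * X &
      [/\ Y * G = gam *: (G * Y), Y ^+ n = 1 - X ^+ w & Y ^+ n = 1 - G ^+ n]].

Definition is_Hcomodule : Prop :=
  [/\ all canon s, uniq s, (forall e, e \notin s -> D e = 0),
      \sum_(e <- s) epsb e *: D e = 1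
    & forall a b : bidx, D b * D a = \sum_(e <- s) coef2 a b (Delb e) *: D e].

(* delta(h.v) = h1 v_(-1) S(h3) (x) h2 v_(0), for h running over the basis *)
Definition is_YDcompat : Prop :=
  forall h : bidx, canon h -> forall e : bidx,
    D e * rhob h =
    \sum_(t <- Del2b h) \sum_(c <- s)
       (t.1.1.1 * coefH e (mulH (mulH (eb t.1.1.2) (eb c)) (antib t.2)))
         *: (rhob t.1.2 * D c).

Definition is_YDmodule : Prop := [/\ is_Hmodule, is_Hcomodule & is_YDcompat].

Definition standard_elt (v : 'cV[K]_d) : Prop :=
  exists (j : nat) (k : int) (al be : K),
    [/\ v != 0, (j < n)%N, al != 0 & be != 0] /\
    [/\ X *m v = al *: v, G *m v = be *: v
      & forall e : bidx, D e *m v = (e == (0%N, j, k))%:R *: v].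

End BHopf.

(* Main.v *)
Require Import Defs.
From HB Require Import structures.
From mathcomp Require Import all_boot all_order all_algebra zify.
Set Implicit Arguments. Unset Strict Implicit. Unset Printing Implicit Defensive.
Import GRing.Theory.
Local Open Scope ring_scope.

Arguments Delb : simpl never.
Section Comp.
Variables (K : fieldType) (n w : nat) (gam : K).
Hypothesis hn : (0 < n)%N.

Lemma normb_small i j k : (i < n)%N ->
  normb K n w i j k = [:: (1, (i, (j %% n)%N, k + (w * (j %/ n))%N%:Z))].
Proof.
move=> hi; rewrite /normb divn_small // modn_small //= muln0 addr0.
by rewrite expr0 bin0 mul1r.
Qed.

Lemma mulb_small i j k i' j' k' : (i + i' < n)%N ->
  mulb n w gam (i, j, k) (i', j', k') =
  [:: (gam ^- (j * i'), (i + i', ((j + j') %% n)%N, k + k' + (w * ((j + j') %/ n))%N%:Z))].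
Proof. by move=> h; rewrite /mulb normb_small //= mulr1. Qed.

Lemma normb_deg i j k p : p \in normb K n w i j k -> p.2.1.1 = (i %% n)%N.
Proof. by rewrite /normb => /mapP [t _ ->]. Qed.

Lemma mulb_deg a b p : p \in mulb n w gam a b -> p.2.1.1 = ((a.1.1 + b.1.1) %% n)%N.
Proof.
case: a => [[i j] k]; case: b => [[i' j'] k'] hp.
rewrite /mulb in hp; case/mapP: hp => q /normb_deg hq -> /=; exact: hq.
Qed.

Definition Inv (U : H2 K) m := forall p, p \in U -> (p.1.2.1.1 + p.2.1.1 = m)%N.

Lemma Inv_mul U V m1 m2 : Inv U m1 -> Inv V m2 -> (m1 + m2 < n)%N ->
  Inv (mulH2 n w gam U V) (m1 + m2).
Proof.
move=> hU hV hm p /flattenP [l /allpairsP [[p1 q1] [hp hq ->]]] /= /allpairsP.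
move=> [[r t]] /= [hr ht ->] /=.
move/mapP: hr => [r' /mulb_deg hr' ->] /=.
rewrite hr' (mulb_deg ht).
simpl in hp, hq; have e1 := hU _ hp; have e2 := hV _ hq.
move: e1 e2 hm; case: p1 {hp ht hr'} => [[c1 [[i1 j1] k1]] [[i2 j2] k2]];
case: q1 {hq} => [[c2 [[i3 j3] k3]] [[i4 j4] k4]] /= e1 e2 hm.
rewrite !modn_small; lia.
Qed.

Lemma Inv_tens (u v : Hf K) a b : (forall p, p \in u -> p.2.1.1 = a) ->
  (forall p, p \in v -> p.2.1.1 = b) -> Inv (tensH u v) (a + b).
Proof.
move=> hu hv p /allpairsP [[x y] /= [hx hy ->]] /=.
by rewrite (hu _ hx) (hv _ hy).
Qed.

Lemma Inv_cat U V m : Inv U m -> Inv V m -> Inv (U ++ V) m.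
Proof. by move=> hU hV p; rewrite mem_cat => /orP [/hU|/hV]. Qed.

Lemma normb_deg0 j k p : p \in normb K n w 0 j k -> p.2.1.1 = 0%N.
Proof. by move/normb_deg; rewrite mod0n. Qed.

Lemma Inv_oneH2 : Inv (oneH2 K n w) 0%N.
Proof. exact: (Inv_tens (@normb_deg0 _ _) (@normb_deg0 _ _)). Qed.

Lemma Inv_pow0 U m : Inv U 0%N -> Inv (powH2 n w gam U m) 0%N.
Proof.
move=> hU; elim: m => [|m IH] /=; first exact: Inv_oneH2.
by apply: (Inv_mul hU IH).
Qed.

Lemma Inv_Dy : (1 < n)%N -> Inv (Dy K n w) 1%N.
Proof.
move=> h1; apply: Inv_cat.
  rewrite -[1%N]addn0; apply: Inv_tens => p; last exact: normb_deg0.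
  by move/normb_deg; rewrite modn_small.
rewrite -[1%N]add0n; apply: Inv_tens => p; first exact: normb_deg0.
by move/normb_deg; rewrite modn_small.
Qed.

Lemma Inv_powDy m : (m < n)%N -> Inv (powH2 n w gam (Dy K n w) m) m.
Proof.
elim: m => [|m IH] hm /=; first exact: Inv_oneH2.
rewrite -add1n; apply: Inv_mul; [apply: Inv_Dy; lia | apply: IH; lia | lia].
Qed.

Lemma Inv_Delb e : (e.1.1 < n)%N -> Inv (Delb n w gam e) e.1.1.
Proof.
case: e => [[i j] k] /= hi.
have h0 : Inv (mulH2 n w gam (powH2 n w gam (Dg K n w) j) (DxpowH n w gam k)) 0%N.
  apply: (Inv_mul (m1 := 0%N) (m2 := 0%N)) => //.
    by refine (@Inv_pow0 _ _ _); exact: (Inv_tens (@normb_deg0 _ _) (@normb_deg0 _ _)).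
  case: k => m; refine (@Inv_pow0 _ _ _); exact: (Inv_tens (@normb_deg0 _ _) (@normb_deg0 _ _)).
by have := Inv_mul (Inv_powDy hi) h0; rewrite addn0; apply.
Qed.

Lemma coef2_deg a b e : (e.1.1 < n)%N -> coef2 a b (Delb n w gam e) != 0 ->
  (a.1.1 + b.1.1 = e.1.1)%N.
Proof.
move=> he; apply: contraNeq => hne; rewrite /coef2 big1_seq // => p /= hp.
case: ifP => // /andP [/eqP ha /eqP hb]; exfalso; move/eqP: hne; apply.
by rewrite -ha -hb; exact: (Inv_Delb he hp).
Qed.

Lemma mulH2_1 c a b c' a' b' ca a2 cb b2 :
  mulb n w gam a a' = [:: (ca, a2)] -> mulb n w gam b b' = [:: (cb, b2)] ->
  mulH2 n w gam [:: (c, a, b)] [:: (c', a', b')] = [:: (c * c' * ca * cb, a2, b2)].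
Proof. by move=> h1 h2; rewrite /mulH2 /= h1 h2. Qed.

Lemma mulH_1 c a c' a' ca a2 :
  mulb n w gam a a' = [:: (ca, a2)] ->
  mulH n w gam [:: (c, a)] [:: (c', a')] = [:: (c * c' * ca, a2)].
Proof. by move=> h1; rewrite /mulH /= h1. Qed.

Lemma normb0 j k : (j < n)%N -> normb K n w 0 j k = [:: (1, (0%N, j, k))].
Proof. by move=> hj; rewrite normb_small // modn_small // divn_small // muln0 addr0. Qed.

Lemma mulb_g j k i' j' k' : (i' < n)%N -> (j + j' < n)%N ->
  mulb n w gam (0%N, j, k) (i', j', k') = [:: (gam ^- (j * i'), (i', (j + j')%N, k + k'))].
Proof.
by move=> h1 h2; rewrite mulb_small // modn_small // divn_small // muln0 addr0.
Qed.

Lemma mulb_r i j k j' k' : (i < n)%N -> (j + j' < n)%N ->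
  mulb n w gam (i, j, k) (0%N, j', k') = [:: (1, (i, (j + j')%N, k + k'))].
Proof.
by move=> h1 h2; rewrite mulb_small ?addn0 // modn_small // divn_small // !muln0 addr0 expr0 invr1 addr0.
Qed.

Lemma oneH2E : oneH2 K n w = [:: (1, (0%N, 0%N, 0), (0%N, 0%N, 0))].
Proof. by rewrite /oneH2 /oneH normb0 // /tensH /= mulr1. Qed.

Lemma powDgE j : (j < n)%N ->
  powH2 n w gam (Dg K n w) j = [:: (1, (0%N, j, 0), (0%N, j, 0))].
Proof.
elim: j => [|j IH] hj /=; first exact: oneH2E.
rewrite IH; last lia.
rewrite /Dg /hg normb0; last lia.
rewrite /tensH /= mulr1.
rewrite (mulH2_1 _ _ (mulb_r _ _ _ _) (mulb_r _ _ _ _)); try lia.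
by rewrite !mulr1.
Qed.

Lemma powDxE m : powH2 n w gam (Dx K n w) m = [:: (1, (0%N, 0%N, m%:Z), (0%N, 0%N, m%:Z))].
Proof.
elim: m => [|m IH] /=; first exact: oneH2E.
rewrite IH /Dx /hx normb0 // /tensH /= mulr1.
rewrite (mulH2_1 _ _ (mulb_r _ _ _ _) (mulb_r _ _ _ _)) //.
by rewrite !mulr1 addrC -addn1.
Qed.

Lemma powDxiE m : powH2 n w gam (Dxi K n w) m = [:: (1, (0%N, 0%N, - m%:Z), (0%N, 0%N, - m%:Z))].
Proof.
elim: m => [|m IH] /=; first by rewrite oneH2E oppr0.
rewrite IH /Dxi /hxi normb0 // /tensH /= mulr1.
rewrite (mulH2_1 _ _ (mulb_r _ _ _ _) (mulb_r _ _ _ _)) //.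
have e : (-1 - m%:Z = - (m.+1)%:Z) by rewrite -addn1 PoszD opprD addrC.
by rewrite !mulr1 e.
Qed.

Lemma DxpowE k : DxpowH n w gam k = [:: (1, (0%N, 0%N, k), (0%N, 0%N, k))].
Proof. by case: k => m; rewrite /DxpowH; [exact: powDxE | rewrite powDxiE NegzE]. Qed.

Lemma Delb0 j k : (j < n)%N ->
  Delb n w gam (0%N, j, k) = [:: (1, (0%N, j, k), (0%N, j, k))].
Proof.
move=> hj; rewrite /Delb /= powDgE // DxpowE oneH2E.
rewrite (mulH2_1 _ _ (mulb_r _ _ _ _) (mulb_r _ _ _ _)) ?addn0 //.
rewrite (mulH2_1 _ _ (mulb_g _ _ _ _) (mulb_g _ _ _ _)) ?add0n //.
by rewrite !muln0 !expr0 !invr1 !mulr1 !add0r.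
Qed.

Lemma Del2b0 j k : (j < n)%N ->
  Del2b n w gam (0%N, j, k) = [:: (1, (0%N, j, k), (0%N, j, k), (0%N, j, k))].
Proof. by move=> hj; rewrite /Del2b Delb0 //= Delb0 //= mulr1. Qed.

Lemma ebE c : canon n c -> eb K n w c = [:: (1, c)].
Proof.
case: c => [[i j] k] /andP [/= hi hj].
by rewrite /eb /= normb_small // modn_small // divn_small // muln0 addr0.
Qed.

Lemma coefH1 e (c : K) f : coefH e [:: (c, f)] = if f == e then c else 0.
Proof. by rewrite /coefH big_cons big_nil addr0. Qed.

Lemma antib_x : antib n w gam (0%N, 0%N, 1) = [:: (1, (0%N, 0%N, -1))].
Proof.
rewrite /antib.
have -> : xpowH n w gam (- 1) = powH n w gam (hxi K n w) 1 by [].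
rewrite /powH /= /hxi /oneH !normb0 //.
rewrite (mulH_1 _ _ (mulb_r _ _ _ _)) // (mulH_1 _ _ (mulb_r _ _ _ _)) //.
rewrite (mulH_1 _ _ (mulb_r _ _ _ _)) //.
by rewrite !mulr1 !addr0.
Qed.

Lemma xconj c : canon n c ->
  mulH n w gam (mulH n w gam (eb K n w (0%N, 0%N, 1)) (eb K n w c)) (antib n w gam (0%N, 0%N, 1))
  = [:: (1, c)].
Proof.
move=> hc; rewrite antib_x (ebE hc) ebE; last by rewrite /canon /= hn.
case: c hc => [[i j] k] /andP [/= hi hj].
rewrite (mulH_1 _ _ (mulb_g _ _ _ _)) // (mulH_1 _ _ (mulb_r _ _ _ _)) ?addn0 //.
by rewrite !mul0n !expr0 !invr1 !mulr1 add0n addrAC subrr add0r.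
Qed.

Lemma antib_g : antib n w gam (0%N, 1%N, 0) = [:: (1, (0%N, n.-1, - w%:Z))].
Proof.
rewrite /antib.
have -> : xpowH n w gam (- 0) = oneH K n w by [].
rewrite /powH /= /hgi /oneH !normb0 //; try lia.
rewrite (mulH_1 _ _ (mulb_r _ _ _ _)) ?addn0 //; try lia.
rewrite (mulH_1 _ _ (mulb_r _ _ _ _)) ?addn0 //; try lia.
rewrite (mulH_1 _ _ (mulb_g _ _ _ _)) ?add0n //; try lia.
by rewrite !mulr1 !addr0 mul0n expr0 invr1 mulr1 add0r.
Qed.

Lemma gconj_ar j : (j < n)%N ->
  (((1 + j) %% n + n.-1) %% n = j)%N /\
  ((w * ((1 + j) %/ n))%N%:Z - w%:Z + (w * (((1 + j) %% n + n.-1) %/ n))%N%:Z = 0).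
Proof.
move=> hj; rewrite add1n; case: (ltngtP j.+1 n) => h.
- rewrite (modn_small h) (divn_small h) muln0.
  have -> : (j.+1 + n.-1 = 1 * n + j)%N by lia.
  rewrite modnMDl divnMDl // (modn_small hj) (divn_small hj).
  by rewrite addn0 muln1 sub0r addNr.
- lia.
- have h' : (n.-1 < n)%N by lia.
  rewrite h modnn divnn hn add0n (modn_small h') (divn_small h').
  rewrite muln1 muln0 subrr addr0; split => //; lia.
Qed.

Lemma gconj c : (1 < n)%N -> canon n c ->
  mulH n w gam (mulH n w gam (eb K n w (0%N, 1%N, 0)) (eb K n w c)) (antib n w gam (0%N, 1%N, 0))
  = [:: (gam ^- c.1.1, c)].
Proof.
move=> h1 hc; rewrite antib_g (ebE hc) ebE; last by rewrite /canon /= hn h1.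
case: c hc => [[i j] k] /andP [/= hi hj].
rewrite (mulH_1 _ _ (mulb_small _ _ _ _ _)) //.
rewrite (mulH_1 _ _ (mulb_small _ _ _ _ _)); last by move: hi; rewrite /GRing.add /=; lia.
have [E1 E2] := gconj_ar hj.
rewrite E1 muln0 mul1n expr0 invr1 !mulr1 !mul1r add0r addr0 add0r.
congr [:: (_, (_, _, _))].
move: E2; set A := (w * _)%N%:Z; set B := (w * _)%N%:Z.
rewrite -!addrA => ->; by rewrite addr0.
Qed.
End Comp.
Section Eig.
Variables (K : closedFieldType) (d : nat) (A : 'M[K]_d.+1) (P : 'cV[K]_d.+1 -> Prop).
Hypothesis PB : forall u v, P u -> P v -> P (u - v).
Hypothesis PZ : forall (a : K) u, P u -> P (a *: u).
Hypothesis PA : forall u, P u -> P (A *m u).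

Lemma P_prod (rs : seq K) v : P v -> P ((\prod_(z <- rs) (A - z%:M)) *m v).
Proof.
move=> hv; elim: rs => [|z rs IH]; first by rewrite big_nil mul1mx.
rewrite big_cons -mulmxE -mulmxA mulmxBl mul_scalar_mx.
by apply: PB; [apply: PA | apply: PZ].
Qed.

Lemma eig_prod (rs : seq K) v : P v -> v != 0 ->
  (\prod_(z <- rs) (A - z%:M)) *m v = 0 ->
  exists l u, [/\ P u, u != 0 & A *m u = l *: u].
Proof.
elim: rs v => [|z rs IH] v hv hv0; first by rewrite big_nil mul1mx => h; rewrite h eqxx in hv0.
rewrite big_cons -mulmxE -mulmxA.
have [hu|hu] := eqVneq ((\prod_(z <- rs) (A - z%:M)) *m v) 0.
  by move=> _; apply: (IH v).
move=> h; exists z, ((\prod_(z <- rs) (A - z%:M)) *m v); split => //.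
  exact: P_prod.
by apply/eqP; rewrite -subr_eq0 -mul_scalar_mx -mulmxBl h.
Qed.

Lemma eigen_in v : P v -> v != 0 -> exists l u, [/\ P u, u != 0 & A *m u = l *: u].
Proof.
move=> hv hv0.
have [rs Hrs] := closed_field_poly_normal (char_poly A).
rewrite (monicP (char_poly_monic A)) scale1r in Hrs.
have HC := Cayley_Hamilton A.
rewrite Hrs rmorph_prod in HC.
apply: (eig_prod (rs := rs) hv hv0).
rewrite -[X in X *m _](_ : horner_mx A (\prod_(z <- rs) ('X - z%:P)) = _); last first.
  by rewrite rmorph_prod; apply: eq_bigr => z _; rewrite rmorphB /= horner_mx_X horner_mx_C.
by rewrite -Hrs Cayley_Hamilton mul0mx.
Qed.
End Eig.
Arguments antib : simpl never.
Arguments rhob : simpl never.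
Arguments eb : simpl never.
Arguments mulH : simpl never.
Section Main.
Variables (K : closedFieldType) (n w : nat) (gam : K).
Hypothesis hn : (0 < n)%N.
Variable d : nat.
Variables (X Xi G Y : 'M[K]_d.+1) (D : bidx -> 'M[K]_d.+1) (s : seq bidx).
Hypothesis hcan : all (canon n) s.
Hypothesis hus : uniq s.
Hypothesis hD0 : forall e, e \notin s -> D e = 0.
Hypothesis hcou : \sum_(e <- s) epsb K e *: D e = 1.
Hypothesis hmul : forall a b : bidx, D b * D a = \sum_(e <- s) coef2 a b (Delb n w gam e) *: D e.
Hypothesis hYD : is_YDcompat n w gam X Xi G Y D s.

Lemma sum_pick (V : lmodType K) (F : bidx -> V) e :
  \sum_(c <- s) (c == e)%:R *: F c = (e \in s)%:R *: F e.
Proof.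
case: (boolP (e \in s)) => he.
  rewrite (bigD1_seq e) //= eqxx scale1r big1 ?addr0 ?scale1r // => c /negbTE ->.
  by rewrite scale0r.
rewrite scale0r big1_seq // => c /andP [_ hc].
by case: eqP => [ce|]; [move: he; rewrite -ce hc | rewrite scale0r].
Qed.

Lemma canon_s c : c \in s -> canon n c.
Proof. exact: (allP hcan). Qed.

Lemma YD_X e : D e * X = X * D e.
Proof.
have := hYD (h := (0%N, 0%N, 1)) _ e.
rewrite /canon /= hn => /(_ isT).
rewrite Del2b0 // big_cons big_nil addr0 /=.
have -> : rhob X Xi G Y (0%N, 0%N, 1) = X by rewrite /rhob /= !expr0 !mul1r expr1.
under eq_big_seq => c hc do rewrite (xconj _ _ hn (canon_s hc)) coefH1 mul1r.
move=> ->.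
rewrite (eq_bigr (fun c => (c == e)%:R *: (X * D c))); last by move=> c _; case: eqP.
rewrite sum_pick; case: (boolP (e \in s)) => he; first by rewrite scale1r.
by rewrite hD0 // scale0r mulr0.
Qed.

Lemma YD_G e : (1 < n)%N -> D e * G = gam ^- e.1.1 *: (G * D e).
Proof.
move=> h1.
have := hYD (h := (0%N, 1%N, 0)) _ e.
rewrite /canon /= hn h1 => /(_ isT).
rewrite Del2b0 // big_cons big_nil addr0 /=.
have -> : rhob X Xi G Y (0%N, 1%N, 0) = G by rewrite /rhob /= !expr0 mul1r expr1 mulr1.
under eq_big_seq => c hc do rewrite (gconj _ _ hn h1 (canon_s hc)) coefH1 mul1r.
move=> ->.
rewrite (eq_bigr (fun c => (c == e)%:R *: (gam ^- c.1.1 *: (G * D c)))); last first.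
  by move=> c _; case: eqP => _; rewrite ?scale1r ?scale0r.
rewrite sum_pick; case: (boolP (e \in s)) => he; first by rewrite scale1r.
by rewrite hD0 // scale0r mulr0 scaler0.
Qed.

Definition Q m (M : 'M[K]_d.+1) := exists f : bidx -> K,
  (forall c, c \in s -> (c.1.1 < m)%N -> f c = 0) /\ M = \sum_(c <- s) f c *: D c.

Lemma Q_mono m m' M : (m <= m')%N -> Q m' M -> Q m M.
Proof.
move=> hm [f [hf ->]]; exists f; split => // c hc hlt; apply: hf => //; lia.
Qed.

Lemma Q_n M : Q n M -> M = 0.
Proof.
move=> [f [hf ->]]; rewrite big1_seq // => c /andP [_ hc].
rewrite hf ?scale0r //; by have /andP [] := canon_s hc.
Qed.

Lemma Q_0 : Q 0 1.
Proof. by exists (epsb K); split => //; rewrite hcou. Qed.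

Lemma Q_D m M b : b \in s -> (0 < b.1.1)%N -> Q m M -> Q m.+1 (D b * M).
Proof.
move=> hb hb0 [f [hf ->]].
exists (fun c' => \sum_(c <- s) f c * coef2 c b (Delb n w gam c')); split.
  move=> c' hc' hlt; rewrite big1_seq // => c /andP [_ hc].
  have [->|fc] := eqVneq (f c) 0; first by rewrite mul0r.
  have [->|cf] := eqVneq (coef2 c b (Delb n w gam c')) 0; first by rewrite mulr0.
  have hc'n : (c'.1.1 < n)%N by have /andP [] := canon_s hc'.
  have := coef2_deg hn hc'n cf => hdeg.
  case: (ltnP c.1.1 m) => hcm; first by move: fc; rewrite hf ?eqxx.
  exfalso; move: hlt hb0 hcm; rewrite -hdeg; move: (c.1.1 : nat) (b.1.1 : nat) => x y; lia.
rewrite mulr_sumr.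
rewrite (eq_bigr (fun c => f c *: \sum_(c' <- s) coef2 c b (Delb n w gam c') *: D c')); last first.
  by move=> c _; rewrite -scalerAr hmul.
rewrite (eq_bigr (fun c => \sum_(c' <- s) (f c * coef2 c b (Delb n w gam c')) *: D c')); last first.
  by move=> c _; rewrite scaler_sumr; apply: eq_bigr => c' _; rewrite scalerA.
rewrite exchange_big /=; apply: eq_bigr => c' _; by rewrite scaler_suml.
Qed.

Lemma stepA k M : Q (n - k) M -> M != 0 ->
  exists v : 'cV[K]_d.+1, v != 0 /\ forall b, b \in s -> (0 < b.1.1)%N -> D b *m v = 0.
Proof.
elim: k M => [|k IH] M hQ hM.
  by rewrite subn0 in hQ; rewrite (Q_n hQ) eqxx in hM.
case: (boolP (has (fun b => (0 < b.1.1)%N && (D b * M != 0)) s)).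
  move=> /hasP [b hb /andP [hb0 hbM]].
  apply: (IH (D b * M)) => //.
  apply: (Q_mono (m' := (n - k.+1).+1)); first lia.
  exact: Q_D.
move=> /hasPn hall.
case: (boolP [exists j : 'I_d.+1, col j M != 0]).
  move=> /existsP [j hj]; exists (col j M); split => // b hb hb0.
  rewrite colE mulmxA mulmxE.
  by have := hall b hb; rewrite hb0 /= negbK => /eqP ->; rewrite mul0mx.
move=> /existsPn hc; exfalso; move/negP: hM; apply; apply/eqP/matrixP => i j.
by move: (hc j); rewrite negbK => /eqP /matrixP /(_ i 0); rewrite !mxE.
Qed.

Lemma stepB (v0 : 'cV[K]_d.+1) : v0 != 0 -> (forall b, b \in s -> (0 < b.1.1)%N -> D b *m v0 = 0) ->
  exists h, [/\ h \in s, h.1.1 = 0%N & D h *m v0 != 0].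
Proof.
move=> hv0 hb.
case: (boolP (has (fun h => (h.1.1 == 0)%N && (D h *m v0 != 0)) s)).
  by move=> /hasP [h hh /andP [/eqP h0 hv]]; exists h.
move=> /hasPn hall; exfalso; move/negP: hv0; apply.
have -> : v0 = (\sum_(e <- s) epsb K e *: D e) *m v0 by rewrite hcou; exact: (esym (mul1mx v0)).
rewrite mulmx_suml big1_seq // => c /andP [_ hc].
rewrite -scalemxAl /epsb; case: eqP => h0; last by rewrite scale0r.
by have := hall c hc; rewrite h0 eqxx /= negbK => /eqP ->; rewrite scaler0.
Qed.

Lemma stepB2 (v0 : 'cV[K]_d.+1) h : (forall b, b \in s -> (0 < b.1.1)%N -> D b *m v0 = 0) -> h \in s ->
  forall e, D e *m (D h *m v0) = (e == h)%:R *: (D h *m v0).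
Proof.
move=> hb hh e.
rewrite mulmxA mulmxE hmul mulmx_suml.
rewrite (eq_big_seq (fun c => (c == h)%:R *: ((e == h)%:R *: (D c *m v0)))).
  by rewrite sum_pick hh scale1r.
move=> c hc; rewrite -scalemxAl; case: (posnP c.1.1) => hc0; last first.
  by rewrite hb // !scaler0.
move: hc hc0; case: c => [[i j] k] hc /= hc0; subst i.
have /andP [_ hj] := canon_s hc.
rewrite Delb0 // /coef2 big_cons big_nil addr0 /=.
case: (eqVneq (0%N, j, k) h) => [<-|ne] /=.
  by rewrite eq_sym; case: eqP => _; rewrite ?scale1r ?scale0r.
by rewrite scale0r scale0r.
Qed.

Lemma Xpow_inj (hXiX : Xi * X = 1) m (v : 'cV[K]_d.+1) : X ^+ m *m v = 0 -> v = 0.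
Proof.
elim: m v => [|m IH] v; first by rewrite expr0 mul1mx.
rewrite exprS -mulmxE -mulmxA => h; apply: IH.
have -> : X ^+ m *m v = (Xi * X) *m (X ^+ m *m v) by rewrite hXiX; exact: (esym (mul1mx _)).
by rewrite -mulmxE -mulmxA h mulmx0.
Qed.

Lemma main_sec (hH : is_Hmodule n w gam X Xi G Y) : exists v, standard_elt n X G D v.
Proof.
case: hH => hXXi hXiX hXG hXY [hYG hYn hYn'].
have hGX : G ^+ n = X ^+ w.
  by rewrite hYn in hYn'; move/addrI/oppr_inj: hYn'.
have [v0 [hv0 hb]] := @stepA n 1 (ltac:(rewrite subnn; exact: Q_0)) (oner_neq0 _).
have [h [hh h0 hu]] := stepB hv0 hb.
have hSu := stepB2 hb hh.
pose S1 (v : 'cV[K]_d.+1) := forall e, D e *m v = (e == h)%:R *: v.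
have S1B : forall u v, S1 u -> S1 v -> S1 (u - v).
  by move=> u v hu' hv e; rewrite mulmxBr hu' hv scalerBr.
have S1Z : forall (a : K) u, S1 u -> S1 (a *: u).
  by move=> a u hu' e; rewrite -scalemxAr hu' !scalerA mulrC.
have S1X : forall u, S1 u -> S1 (X *m u).
  by move=> u hu' e; rewrite mulmxA mulmxE YD_X -mulmxE -mulmxA hu' scalemxAr.
have S1Xn : forall m u, S1 u -> S1 (X ^+ m *m u).
  move=> m u hu'; elim: m => [|m IH]; first by rewrite expr0 mul1mx.
  by rewrite exprS -mulmxE -mulmxA; apply: S1X.
have S1G : forall u, S1 u -> S1 (G *m u).
  move=> u hu'; case: (ltngtP n 1) => hn1.
  - lia.
  - move=> e; rewrite mulmxA mulmxE (YD_G _ hn1) -scalemxAl -mulmxE -mulmxA hu'.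
    case: eqP => [->|_]; last by rewrite !scale0r mulmx0 scaler0.
    by rewrite h0 expr0 invr1 !scale1r.
  - have -> : G = X ^+ w by rewrite -hGX hn1 expr1.
    exact: S1Xn.
have [l [v1 [hS1 hv1 hX1]]] := eigen_in S1B S1Z S1X hSu hu.
pose S2 (v : 'cV[K]_d.+1) := S1 v /\ X *m v = l *: v.
have S2B : forall u v, S2 u -> S2 v -> S2 (u - v).
  by move=> u v [hu1 hu2] [hv3 hv4]; split; [exact: S1B | rewrite mulmxBr hu2 hv4 scalerBr].
have S2Z : forall (a : K) u, S2 u -> S2 (a *: u).
  by move=> a u [hu1 hu2]; split; [exact: S1Z | rewrite -scalemxAr hu2 !scalerA mulrC].
have S2G : forall u, S2 u -> S2 (G *m u).
  move=> u [hu1 hu2]; split; first exact: S1G.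
  by rewrite mulmxA mulmxE hXG -mulmxE -mulmxA hu2 scalemxAr.
have [be [v [[hS hXv] hv hGv]]] := eigen_in S2B S2Z S2G (conj hS1 hX1) hv1.
have hl : l != 0.
  apply/eqP => hl0; move/eqP: hv; apply; apply: (@Xpow_inj hXiX 1).
  by rewrite expr1 hXv hl0 scale0r.
have hbe : be != 0.
  apply/eqP => hb0; move/eqP: hv; apply; apply: (@Xpow_inj hXiX w).
  rewrite -hGX; case: n hn => // n' _.
  by rewrite exprSr -mulmxE -mulmxA hGv hb0 scale0r mulmx0.
have eh : h = (0%N, h.1.2, h.2) by rewrite -h0; case: (h) => [[]].
exists v, h.1.2, h.2, l, be; split; split => //.
  by have /andP [] := canon_s hh.
by move=> e; rewrite -eh hS.
Qed.
End Main.

Theorem lemma3p3 (K : closedFieldType) (charK : [pchar K] =i pred0)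
  (n w : nat) (gam : K) (hn : (0 < n)%N) (hw : (0 < w)%N)
  (hgam : n.-primitive_root gam)
  (d : nat) (hd : (0 < d)%N) (X Xi G Y : 'M[K]_d) (D : bidx -> 'M[K]_d)
  (s : seq bidx) :
  is_YDmodule n w gam X Xi G Y D s ->
  exists v : 'cV[K]_d, standard_elt n X G D v.
Proof.
case: d hd X Xi G Y D => // d _ X Xi G Y D [hH [hcan hus hD0 hcou hmul] hYD].
exact: (main_sec hn hcan hus hD0 hcou hmul hYD hH).
Qed.
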